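(* Let $K$ be a field, $m\ge2$, $d_1,\ldots,d_m$ positive integers, $S=K[x_1,\ldots,x_m,y_1,\ldots,y_m]$, and $I_2(D)\subset S$ the ideal generated by the $2$-minors of $D=\begin{pmatrix}x_1^{d_1}&\cdots&x_m^{d_m}\\ y_1^{d_1}&\cdots&y_m^{d_m}\end{pmatrix}$. For $1\le i<j\le m$ let $f_{ij}=x_i^{d_i}y_j^{d_j}-x_j^{d_j}y_i^{d_i}$. Then for any term order $\prec$ on $S$, the reduced Gröbner basis of $I_2(D)$ with respect to $\prec$ is $\mathcal{G}=\{f_{ij}:1\le i<j\le m\}$. *)

(* Defs.v *)
From HB Require Import structures.
From mathcomp Require Import all_boot all_order all_algebra.
From mathcomp Require Import mpoly.
Set Implicit Arguments. Unset Strict Implicit. Unset Printing Implicit Defensive.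
Import GRing.Theory.
Local Open Scope ring_scope.

Section Groebner.
Variables (n : nat) (K : fieldType).

(* A term order on monomials 'X_{1..n}, given by its strict relation [lt]:
   a strict total order, compatible with multiplication of monomials,
   with 1 (= mnm0) the least monomial (hence a well-order, by Dickson). *)
Definition term_order (lt : rel 'X_{1..n}) : Prop :=
  [/\ (forall a, ~~ lt a a),
      (forall a b c, lt a b -> lt b c -> lt a c),
      (forall a b, a != b -> lt a b || lt b a),
      (forall a b c, lt a b -> lt (mnm_add a c) (mnm_add b c))
    & (forall a, a != mnm0 -> lt mnm0 a)].

(* leading monomial: the lt-largest monomial of the support (mnm0 for p = 0) *)
Definition lmon (lt : rel 'X_{1..n}) (p : {mpoly K[n]}) : 'X_{1..n} :=
  foldr (fun a b => if lt b a then a else b) mnm0 (msupp p).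

Definition lcoef (lt : rel 'X_{1..n}) (p : {mpoly K[n]}) : K :=
  p@_(lmon lt p).

Definition in_ideal (gens : seq {mpoly K[n]}) (p : {mpoly K[n]}) : Prop :=
  exists cs : seq {mpoly K[n]},
    size cs = size gens /\ p = \sum_(k < size gens) cs`_k * gens`_k.

Definition is_groebner (lt : rel 'X_{1..n}) (I : {mpoly K[n]} -> Prop)
    (G : seq {mpoly K[n]}) : Prop :=
  (forall g, g \in G -> I g) /\
  (forall f, I f -> f != 0 ->
     exists2 g, g \in G & (g != 0) && lem (lmon lt g) (lmon lt f)).

Definition is_reduced_groebner (lt : rel 'X_{1..n}) (I : {mpoly K[n]} -> Prop)
    (G : seq {mpoly K[n]}) : Prop :=
  [/\ is_groebner lt I G,
      (forall g, g \in G -> lcoef lt g = 1)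
    & (forall g g', g \in G -> g' \in G -> g != g' ->
         forall mo, mo \in msupp g' -> ~~ lem (lmon lt g) mo)].
End Groebner.

Section Binomial.
Variables (m : nat) (K : fieldType) (d : 'I_m -> nat).

Definition xv (i : 'I_m) : {mpoly K[m + m]} := 'X_(lshift m i).
Definition yv (i : 'I_m) : {mpoly K[m + m]} := 'X_(rshift m i).

Definition Dmat : 'M[{mpoly K[m + m]}]_(2, m) :=
  \matrix_(a < 2, j < m) (if a == 0 then xv j ^+ d j else yv j ^+ d j).

Definition minor2 (i j : 'I_m) : {mpoly K[m + m]} :=
  \det (\matrix_(a < 2, b < 2) Dmat a (if b == 0 then i else j)).

Definition minors2 : seq {mpoly K[m + m]} :=
  [seq minor2 ij.1 ij.2 | ij <- [seq ij : 'I_m * 'I_m <- [seq (i, j) | i <- enum 'I_m, j <- enum 'I_m] | (ij.1 < ij.2)%N]].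

Definition I2D (p : {mpoly K[m + m]}) : Prop := in_ideal minors2 p.

Definition fij (i j : 'I_m) : {mpoly K[m + m]} :=
  xv i ^+ d i * yv j ^+ d j - xv j ^+ d j * yv i ^+ d i.

Definition fij_monic (lt : rel 'X_{1..m + m}) (i j : 'I_m) : {mpoly K[m + m]} :=
  (lcoef lt (fij i j))^-1 *: fij i j.

Definition Gset (lt : rel 'X_{1..m + m}) : seq {mpoly K[m + m]} :=
  [seq fij_monic lt ij.1 ij.2 | ij <- [seq ij : 'I_m * 'I_m <- [seq (i, j) | i <- enum 'I_m, j <- enum 'I_m] | (ij.1 < ij.2)%N]].
End Binomial.

(* Main.v *)
Require Import Defs.
From mathcomp Require Import all_boot all_order all_algebra.
From mathcomp Require Import mpoly.
From mathcomp Require Import zify.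
Set Implicit Arguments. Unset Strict Implicit. Unset Printing Implicit Defensive.
Import GRing.Theory.
Local Open Scope ring_scope.

Section Gen.
Variables (n : nat) (K : fieldType) (lt : rel 'X_{1..n}).
Hypothesis Hlt : term_order lt.

Lemma lt_irr a : ~~ lt a a. Proof. by case: Hlt. Qed.
Lemma lt_trans a b c : lt a b -> lt b c -> lt a c.
Proof. by case: Hlt => _ H _ _ _; apply: H. Qed.
Lemma lt_total a b : a != b -> lt a b || lt b a.
Proof. by case: Hlt => _ _ H _ _; apply: H. Qed.
Lemma lt_addr c a b : lt a b -> lt (a + c)%MM (b + c)%MM.
Proof. by case: Hlt => _ _ _ H _; apply: H. Qed.
Lemma lt0 a : a != 0%MM -> lt 0%MM a.
Proof. by case: Hlt => _ _ _ _ H; apply: H. Qed.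

Lemma lt_asym a b : lt a b -> ~~ lt b a.
Proof. move=> ab; apply/negP => ba; by move: (lt_irr a); rewrite (lt_trans ab ba). Qed.

Lemma lt_cancel a b c : lt (a + c)%MM (b + c)%MM -> lt a b.
Proof.
move=> H; have [e|ne] := eqVneq a b; first by move: H; rewrite e (negbTE (lt_irr _)).
case/orP: (lt_total ne) => // ba.
by move: (lt_asym H); rewrite (lt_addr c ba).
Qed.

Lemma lem_le (a b : 'X_{1..n}) : lem a b -> a = b \/ lt a b.
Proof.
move=> ab; rewrite -(submK ab).
have [e|ne] := eqVneq (b - a)%MM 0%MM; first by left; rewrite e add0m.
right; have := lt_addr a (lt0 ne); by rewrite add0m.
Qed.

Lemma lem_anti (a b : 'X_{1..n}) : lem a b -> lem b a -> a = b.
Proof.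
by move=> /mnm_lepP H1 /mnm_lepP H2; apply/mnmP => i; apply/eqP; rewrite eqn_leq H1 H2.
Qed.

Definition fmax (s : seq 'X_{1..n}) :=
  foldr (fun a b => if lt b a then a else b) 0%MM s.

Lemma fmaxP s : (fmax s = 0%MM \/ fmax s \in s) /\
  (forall mu, mu \in s -> mu = fmax s \/ lt mu (fmax s)).
Proof.
elim: s => [|a s [H1 H2]] /=; first by split; [left|].
rewrite /fmax /= -/(fmax s).
case: ifP => aM.
- split; first by right; rewrite inE eqxx.
  move=> mu; rewrite inE => /orP [/eqP ->|/H2 [->|muM]]; [by left| by right| ].
  by right; exact: lt_trans muM aM.
- split; first by case: H1 => [->|H]; [left|right; rewrite inE H orbT].
  move=> mu; rewrite inE => /orP [/eqP ->|/H2 //].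
  have [->|ne] := eqVneq a (fmax s); first by left.
  by case/orP: (lt_total ne) => h; [right|]; [|by rewrite h in aM].
Qed.

Lemma lmon_max (p : {mpoly K[n]}) mu :
  mu \in msupp p -> mu = lmon lt p \/ lt mu (lmon lt p).
Proof. by case: (fmaxP (msupp p)) => _ H; apply: H. Qed.

Lemma lmon_supp (p : {mpoly K[n]}) : p != 0 -> lmon lt p \in msupp p.
Proof.
move=> p0; case: (fmaxP (msupp p)) => [[H|H] H2]; last by [].
rewrite /lmon -/(fmax _) H.
have: nth 0%MM (msupp p) 0 \in msupp p.
  by rewrite mem_nth // lt0n size_eq0 msupp_eq0.
set mu := nth _ _ _ => Hmu.
move: (H2 _ Hmu); rewrite H => -[<-//|h].
have [e|ne] := eqVneq mu 0%MM; first by move: h; rewrite e (negbTE (lt_irr _)).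
by move: (lt_asym h); rewrite lt0.
Qed.

Lemma supp_neq0 (p : {mpoly K[n]}) mu : mu \in msupp p -> p != 0.
Proof. by rewrite mcoeff_msupp; apply: contraNneq => ->; rewrite mcoeff0. Qed.

Lemma lmon_char (p : {mpoly K[n]}) mu : mu \in msupp p ->
  (forall nu, nu \in msupp p -> nu = mu \/ lt nu mu) -> lmon lt p = mu.
Proof.
move=> Hmu H; have p0 := supp_neq0 Hmu.
case: (H _ (lmon_supp p0)) => // h1.
case: (lmon_max Hmu) => [->//|h2].
by move: (lt_asym h1); rewrite h2.
Qed.

Lemma lcoef_neq0 (p : {mpoly K[n]}) : lcoef lt p = 1 -> p != 0.
Proof.
move=> H; apply/eqP => p0; move: H; rewrite /lcoef p0 mcoeff0 => /eqP.
by rewrite eq_sym oner_eq0.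
Qed.

Lemma lmon_scale c (p : {mpoly K[n]}) : c != 0 -> lmon lt (c *: p) = lmon lt p.
Proof.
move=> c0; have [->|p0] := eqVneq p 0; first by rewrite scaler0.
have E : forall mu, (mu \in msupp (c *: p)) = (mu \in msupp p).
  by move=> mu; rewrite !mcoeff_msupp mcoeffZ mulf_eq0 negb_or c0.
apply: lmon_char; first by rewrite E lmon_supp.
by move=> nu; rewrite E; apply: lmon_max.
Qed.

Lemma reduced_sub (I : {mpoly K[n]} -> Prop) G G' :
  (forall p q, I p -> I q -> I (p - q)) ->
  is_reduced_groebner lt I G -> is_reduced_groebner lt I G' -> {subset G <= G'}.
Proof.
move=> Isub [[GI Gl] Gc Gr] [[G'I G'l] G'c G'r] g gG.
have g0 : g != 0 by apply: lcoef_neq0; apply: Gc.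
have [g' g'G' /andP [g'0 l1]] := G'l g (GI g gG) g0.
have [g'' g''G /andP [g''0 l2]] := Gl g' (G'I g' g'G') g'0.
have gg'' : g'' = g.
  apply/eqP; apply/negP => /negP ne.
  have := Gr g'' g g''G gG ne (lmon lt g) (lmon_supp g0).
  by rewrite (lepm_trans l2 l1).
subst g''.
have Leq : lmon lt g' = lmon lt g by apply: lem_anti.
suff -> : g = g' by [].
apply/eqP; rewrite -subr_eq0; apply/negP => /negP h0.
set h := g - g' in h0.
have hI : I h by apply: Isub; [apply: GI|apply: G'I].
have Lh := lmon_supp h0.
have hL : lmon lt h != lmon lt g.
  apply/eqP => e; move: Lh; rewrite e mcoeff_msupp mcoeffB.
  have := Gc g gG; have := G'c g' g'G'; rewrite /lcoef Leq => -> ->.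
  by rewrite subrr eqxx.
move: (msuppB_le Lh); rewrite mem_cat => /orP [Hm|Hm].
- have [g2 g2G /andP [_ l3]] := Gl h hI h0.
  have [e|ne] := eqVneq g2 g.
  + subst g2.
    case: (lmon_max Hm) => [e|lt1]; first by rewrite e eqxx in hL.
    case: (lem_le l3) => [e|lt2]; first by rewrite e eqxx in hL.
    by move: (lt_asym lt1); rewrite lt2.
  + by move: (Gr g2 g g2G gG ne _ Hm); rewrite l3.
- have [g2 g2G /andP [_ l3]] := G'l h hI h0.
  have [e|ne] := eqVneq g2 g'.
  + subst g2.
    case: (lmon_max Hm) => [e|lt1]; first by rewrite e Leq eqxx in hL.
    case: (lem_le l3) => [e|lt2]; first by rewrite -e Leq eqxx in hL.
    by move: (lt_asym lt1); rewrite lt2.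
  + by move: (G'r g2 g' g2G g'G' ne _ Hm); rewrite l3.
Qed.

Lemma reduced_eqi (I : {mpoly K[n]} -> Prop) G G' : G =i G' ->
  is_reduced_groebner lt I G' -> is_reduced_groebner lt I G.
Proof.
move=> E [[A B] C D]; split; first split.
- by move=> g; rewrite E; apply: A.
- by move=> f If f0; have [g gG h] := B f If f0; exists g; rewrite ?E.
- by move=> g; rewrite E; apply: C.
- by move=> g g'; rewrite !E; apply: D.
Qed.

End Gen.

Lemma det2 (R : comNzRingType) (A : 'M[R]_2) : \det A = A 0 0 * A 1 1 - A 0 1 * A 1 0.
Proof.
rewrite (expand_det_row _ 0) !big_ord_recl big_ord0 addr0.
rewrite /cofactor !det_mx11 !mxE /= expr0 expr1 mul1r mulN1r mulrN.
by congr (_ * A _ _ - A _ _ * A _ _); apply/val_inj.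
Qed.

Section Bin.
Variables (m : nat) (K : fieldType) (d : 'I_m -> nat).
Hypothesis dpos : forall i, (0 < d i)%N.

Lemma eq_lsh (a k : 'I_m) : (lshift m a == lshift m k) = (a == k).
Proof. by apply/eqP/eqP => [/lshift_inj|->]. Qed.
Lemma eq_rsh (a k : 'I_m) : (rshift m a == rshift m k) = (a == k).
Proof. by apply/eqP/eqP => [/rshift_inj|->]. Qed.
Lemma eq_lrsh (a k : 'I_m) : (lshift m a == rshift m k) = false.
Proof.
apply/negbTE/eqP => /(congr1 val) /= e; have := ltn_ord a.
by rewrite e ltnNge leq_addr.
Qed.
Lemma eq_rlsh (a k : 'I_m) : (rshift m a == lshift m k) = false.
Proof. by rewrite eq_sym eq_lrsh. Qed.

Definition XX (a : 'I_m) : 'X_{1..m+m} := (U_(lshift m a) *+ d a)%MM.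
Definition YY (a : 'I_m) : 'X_{1..m+m} := (U_(rshift m a) *+ d a)%MM.
Definition Lm (a b : 'I_m) := (XX a + YY b)%MM.

Lemma XXl a k : XX a (lshift m k) = ((a == k) * d k)%N.
Proof. by rewrite /XX mulmnE mnm1E eq_lsh; case: eqP => [->|]. Qed.
Lemma XXr a k : XX a (rshift m k) = 0%N.
Proof. by rewrite /XX mulmnE mnm1E eq_lrsh. Qed.
Lemma YYl a k : YY a (lshift m k) = 0%N.
Proof. by rewrite /YY mulmnE mnm1E eq_rlsh. Qed.
Lemma YYr a k : YY a (rshift m k) = ((a == k) * d k)%N.
Proof. by rewrite /YY mulmnE mnm1E eq_rsh; case: eqP => [->|]. Qed.

Lemma fijE a b : fij K d a b = 'X_[Lm a b] - 'X_[Lm b a].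
Proof. by rewrite /fij /xv /yv !mpolyXn -!mpolyXD. Qed.

Lemma minor2E a b : minor2 K d a b = fij K d a b.
Proof.
rewrite /minor2 det2 !mxE.
have e10 : ((1 : 'I_2) == 0) = false by [].
rewrite eqxx e10.
by [].
Qed.
End Bin.

Section Comb.
Variables (m : nat) (K : fieldType) (d : 'I_m -> nat).
Hypothesis dpos : forall i, (0 < d i)%N.
Variable lt : rel 'X_{1..m+m}.
Hypothesis Hlt : term_order lt.

Local Notation Lm := (Lm d).
Local Notation XX := (XX d).
Local Notation YY := (YY d).

Definition qx (mu : 'X_{1..m+m}) k := (mu (lshift m k) %/ d k)%N.
Definition qy (mu : 'X_{1..m+m}) k := (mu (rshift m k) %/ d k)%N.
Definition inv (mu : 'X_{1..m+m}) :=
  ([ffun k => (mu (lshift m k) %% d k, mu (rshift m k) %% d k, qx mu k + qy mu k)%N],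
   (\sum_k qx mu k)%N).

Lemma qxL mu a b k : qx (mu + Lm a b)%MM k = ((a == k) + qx mu k)%N.
Proof. by rewrite /qx !mnmDE XXl YYl addn0 addnC divnMDl. Qed.
Lemma qyL mu a b k : qy (mu + Lm a b)%MM k = ((b == k) + qy mu k)%N.
Proof. by rewrite /qy !mnmDE XXr YYr add0n addnC divnMDl. Qed.
Lemma rxL mu a b k : ((mu + Lm a b)%MM (lshift m k) %% d k = mu (lshift m k) %% d k)%N.
Proof. by rewrite !mnmDE XXl YYl addn0 addnC modnMDl. Qed.
Lemma ryL mu a b k : ((mu + Lm a b)%MM (rshift m k) %% d k = mu (rshift m k) %% d k)%N.
Proof. by rewrite !mnmDE XXr YYr add0n addnC modnMDl. Qed.

Lemma sum_ind (a : 'I_m) (F : 'I_m -> nat) : (\sum_k (a == k) * F k = F a)%N.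
Proof.
rewrite (bigD1 a) //= eqxx mul1n big1 ?addn0 // => k /negbTE.
by rewrite eq_sym => ->.
Qed.

Lemma sum_qxL mu a b : (\sum_k qx (mu + Lm a b)%MM k = (\sum_k qx mu k).+1)%N.
Proof.
under eq_bigr do rewrite qxL.
rewrite big_split /= -add1n; congr (_ + _)%N.
rewrite (bigD1 a) //= eqxx big1 // => k /negbTE.
by rewrite eq_sym => ->.
Qed.

Lemma inv_swap mu a b : inv (mu + Lm a b)%MM = inv (mu + Lm b a)%MM.
Proof.
rewrite /inv !sum_qxL; f_equal; apply/ffunP => k; rewrite !ffunE.
by rewrite !rxL !ryL !qxL !qyL addnACA [in RHS]addnACA (addnC (a == k)).
Qed.

Definition P a b := lt (Lm b a) (Lm a b).
Definition rank a := #|[pred l | P a l]|.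
Definition Phi mu := (\sum_k qx mu k * rank k)%N.

Lemma PhiL mu a b : Phi (mu + Lm a b)%MM = (rank a + Phi mu)%N.
Proof.
rewrite /Phi; under eq_bigr do rewrite qxL mulnDl.
by rewrite big_split /= sum_ind.
Qed.

Lemma P_trans i j l : P i j -> P j l -> P i l.
Proof.
move=> h1 h2.
have h3 : lt (Lm i j + Lm l j)%MM (Lm j l + Lm i j)%MM.
  by rewrite addmC; apply: (lt_addr Hlt).
have := lt_trans Hlt (lt_addr Hlt (Lm l j) h1) h3.
have -> : (Lm j i + Lm l j = Lm l i + (XX j + YY j))%MM.
  by apply/mnmP => t; rewrite /Lm !mnmDE; lia.
have -> : (Lm j l + Lm i j = Lm i l + (XX j + YY j))%MM.
  by apply/mnmP => t; rewrite /Lm !mnmDE; lia.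
exact: (lt_cancel Hlt).
Qed.

Lemma rank_lt a b : P a b -> (rank b < rank a)%N.
Proof.
move=> Pab; apply: proper_card; apply/properP; split.
  by apply/subsetP => l; rewrite !inE => Pbl; exact: P_trans Pab Pbl.
by exists b; rewrite !inE //; apply: (lt_irr Hlt).
Qed.

Lemma Lm_neq a b : a != b -> Lm a b != Lm b a.
Proof.
move=> ab; apply/negP => /eqP /(congr1 (fun mu : 'X_{1..m+m} => mu (lshift m a))).
rewrite /Lm !mnmDE !XXl !YYl eqxx eq_sym (negbTE ab) /=.
by move: (dpos a); lia.
Qed.

Lemma P_total a b : a != b -> P a b || P b a.
Proof. by move=> ab; rewrite /P orbC; exact: (lt_total Hlt (Lm_neq ab)). Qed.

Definition std (mu : 'X_{1..m+m}) := [forall a, forall b, (a != b) ==> P a b ==> ~~ lem (Lm a b) mu].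

Lemma lem_Lm a b (mu : 'X_{1..m+m}) : (d a <= mu (lshift m a))%N -> (d b <= mu (rshift m b))%N ->
  lem (Lm a b) mu.
Proof.
move=> ha hb; apply/mnm_lepP => t; rewrite /Lm mnmDE.
case: (split_ordP t) => k ->.
  by rewrite XXl YYl addn0; case: eqP => [<-|]; rewrite ?mul1n ?mul0n.
by rewrite XXr YYr add0n; case: eqP => [<-|]; rewrite ?mul1n ?mul0n.
Qed.

Lemma eq_le_sum (a b : 'I_m -> nat) : (forall k, a k <= b k)%N ->
  (\sum_k a k = \sum_k b k)%N -> forall k, a k = b k.
Proof.
move=> le e k.
have E : (\sum_k b k = \sum_k a k + \sum_k (b k - a k))%N.
  by rewrite -big_split /=; apply: eq_bigr => i _; rewrite subnKC.
move: E; rewrite -e -{1}(addn0 (\sum_k a k)) => /eqP; rewrite eqn_add2l eq_sym.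
rewrite sum_nat_eq0 => /forallP /(_ k) /=.
by move: (le k); lia.
Qed.

Lemma std_uniq mu1 mu2 : std mu1 -> std mu2 -> inv mu1 = inv mu2 -> mu1 = mu2.
Proof.
move=> s1 s2 E.
have [Ef Es] : [ffun k => (mu1 (lshift m k) %% d k, mu1 (rshift m k) %% d k,
     qx mu1 k + qy mu1 k)%N] =
   [ffun k => (mu2 (lshift m k) %% d k, mu2 (rshift m k) %% d k,
     qx mu2 k + qy mu2 k)%N] /\ (\sum_k qx mu1 k = \sum_k qx mu2 k)%N.
  by case: E => -> ->.
have Ek : forall k, [/\ (mu1 (lshift m k) %% d k = mu2 (lshift m k) %% d k)%N,
   (mu1 (rshift m k) %% d k = mu2 (rshift m k) %% d k)%N &
   (qx mu1 k + qy mu1 k = qx mu2 k + qy mu2 k)%N].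
  by move=> k; move/ffunP: Ef => /(_ k); rewrite !ffunE => -[-> -> ->].
have key : forall i j, (qx mu2 i < qx mu1 i)%N -> (qx mu1 j < qx mu2 j)%N -> False.
  move=> i j hi hj.
  have ij : i != j by apply/eqP => e; subst j; move: hi hj; lia.
  have [_ _ ci] := Ek i; have [_ _ cj] := Ek j.
  have h1 : lem (Lm i j) mu1.
    apply: lem_Lm; rewrite -divn_gt0 //; rewrite -/(qx _ _) -/(qy _ _); lia.
  have h2 : lem (Lm j i) mu2.
    apply: lem_Lm; rewrite -divn_gt0 //; rewrite -/(qx _ _) -/(qy _ _); lia.
  move/forallP: s1 => /(_ i) /forallP /(_ j); rewrite ij h1 /= => /negbTE n1.
  move/forallP: s2 => /(_ j) /forallP /(_ i); rewrite eq_sym ij h2 /= => /negbTE n2.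
  by move: (P_total ij); rewrite n1 n2.
have Eqx : forall k, qx mu1 k = qx mu2 k.
  have [/existsP [i hi]|H] := boolP [exists i, qx mu2 i < qx mu1 i]%N.
    have le : forall k, (qx mu2 k <= qx mu1 k)%N.
      by move=> k; rewrite leqNgt; apply/negP => hk; exact: key i k hi hk.
    by move: hi; rewrite (eq_le_sum le (esym Es)) ltnn.
  have le : forall k, (qx mu1 k <= qx mu2 k)%N.
    move=> k; rewrite leqNgt; apply/negP => hk; move/negP: H; apply.
    by apply/existsP; exists k.
  exact: eq_le_sum le Es.
apply/mnmP => t; case: (split_ordP t) => k ->.
  have [e1 _ _] := Ek k.
  by rewrite (divn_eq (mu1 _) (d k)) (divn_eq (mu2 _) (d k)) e1 -/(qx _ _) -/(qx _ _) Eqx.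
have [_ e1 c] := Ek k.
have Eqy : qy mu1 k = qy mu2 k by move: c; rewrite Eqx; lia.
by rewrite (divn_eq (mu1 _) (d k)) (divn_eq (mu2 _) (d k)) e1 -/(qy _ _) -/(qy _ _) Eqy.
Qed.

Lemma fib_min s : std s -> forall mu, inv s = inv mu -> s = mu \/ lt s mu.
Proof.
move=> ss.
suff H : forall N mu, (Phi mu < N)%N -> inv s = inv mu -> s = mu \/ lt s mu.
  by move=> mu; apply: H (ltnSn _).
elim=> [|N IH] mu //.
move=> PhiN Hinv.
have [smu|nsmu] := boolP (std mu); first by left; apply: std_uniq.
move: nsmu; rewrite negb_forall => /existsP [a]; rewrite negb_forall => /existsP [b].
rewrite !negb_imply => /and4P [ab Pab lemab _].
set nu := (mu - Lm a b)%MM.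
have Emu : mu = (nu + Lm a b)%MM by rewrite /nu submK.
set mu' := (nu + Lm b a)%MM.
have lt' : lt mu' mu by rewrite Emu /mu' addmC (addmC nu); apply: (lt_addr Hlt).
have inv' : inv s = inv mu' by rewrite Hinv Emu inv_swap.
have Phi' : (Phi mu' < N)%N.
  by move: PhiN; rewrite Emu /mu' !PhiL; have := rank_lt Pab; lia.
case: (IH mu' Phi' inv') => [e|h]; right; first by rewrite e.
exact: (lt_trans Hlt h lt').
Qed.
End Comb.

Section Ideal.
Variables (n : nat) (K : fieldType).
Implicit Types (p q : {mpoly K[n]}) (gens : seq {mpoly K[n]}).

Lemma in_ideal_sub gens p q : in_ideal gens p -> in_ideal gens q -> in_ideal gens (p - q).
Proof.
case=> cp [sp ->] [cq [sq ->]].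
exists [seq cp`_k - cq`_k | k <- iota 0 (size gens)]; split.
  by rewrite size_map size_iota.
rewrite -sumrB; apply: eq_bigr => k _.
by rewrite (nth_map 0%N) ?size_iota // nth_iota // add0n mulrBl.
Qed.

Lemma in_ideal_gen gens g c : g \in gens -> in_ideal gens (c *: g).
Proof.
move=> gG.
exists [seq (if k == index g gens then c%:MP else 0) | k <- iota 0 (size gens)]; split.
  by rewrite size_map size_iota.
have Hi : (index g gens < size gens)%N by rewrite index_mem.
rewrite (bigD1 (Ordinal Hi)) //= big1 ?addr0.
  by rewrite (nth_map 0%N) ?size_iota // nth_iota // add0n eqxx nth_index // mul_mpolyC.
move=> k nk; rewrite (nth_map 0%N) ?size_iota // nth_iota // add0n.
by move: nk; rewrite -val_eqE /= => /negbTE ->; rewrite mul0r.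
Qed.
End Ideal.

Section Poly.
Variables (m : nat) (K : fieldType) (d : 'I_m -> nat).
Hypothesis dpos : forall i, (0 < d i)%N.
Variable lt : rel 'X_{1..m+m}.
Hypothesis Hlt : term_order lt.
Local Notation Lm := (Lm d).
Local Notation inv := (inv d).
Local Notation P := (P d lt).
Local Notation std := (std d lt).
Implicit Types p q : {mpoly K[m+m]}.

Definition FS v p := \sum_(mu <- msupp p | inv mu == v) p@_mu.

Lemma FS_sub v p s : uniq s -> {subset msupp p <= s} ->
  \sum_(mu <- s | inv mu == v) p@_mu = FS v p.
Proof.
move=> us sub.
rewrite -(perm_big _ (permEl (perm_filterC (mem (msupp p)) s))) big_cat /=.
rewrite [X in _ + X]big1_seq ?addr0; last first.
  by move=> mu /andP [_]; rewrite mem_filter => /andP [H _]; apply: memN_msupp_eq0.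
apply: perm_big; apply: uniq_perm; [exact: filter_uniq | exact: msupp_uniq |].
by move=> mu; rewrite mem_filter; apply/andP/idP => [[]//|H]; split => //; exact: sub.
Qed.

Lemma FSD v p q : FS v (p + q) = FS v p + FS v q.
Proof.
set s := undup (msupp p ++ msupp q ++ msupp (p + q)).
have us : uniq s := undup_uniq _.
have s1 : {subset msupp p <= s} by move=> x h; rewrite mem_undup !mem_cat h.
have s2 : {subset msupp q <= s} by move=> x h; rewrite mem_undup !mem_cat h orbT.
have s3 : {subset msupp (p + q) <= s} by move=> x h; rewrite mem_undup !mem_cat h !orbT.
rewrite -(FS_sub _ us s1) -(FS_sub _ us s2) -(FS_sub _ us s3) -big_split /=.
by apply: eq_bigr => mu _; exact: mcoeffD.
Qed.

Lemma FSZ v c p : FS v (c *: p) = c * FS v p.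
Proof.
rewrite -(FS_sub _ (msupp_uniq p) (@msuppZ_le _ _ c p)) /FS mulr_sumr.
by apply: eq_bigr => mu _; exact: mcoeffZ.
Qed.

Lemma FS0 v : FS v 0 = 0.
Proof. by have := FSZ v 0 0; rewrite scale0r mul0r. Qed.

Lemma FSB v p q : FS v (p - q) = FS v p - FS v q.
Proof. by rewrite FSD -scaleN1r FSZ mulN1r. Qed.

Lemma FSX v w : FS v 'X_[w] = (inv w == v)%:R.
Proof.
rewrite /FS msuppX big_cons big_nil mcoeffX eqxx.
by case: eqP => _; rewrite ?addr0.
Qed.

Lemma FS_fij v c a b : FS v (c * fij K d a b) = 0.
Proof.
rewrite fijE {1}[c]mpolyE mulr_suml (big_morph (FS v) (FSD v) (FS0 v)).
rewrite big1 // => nu _.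
by rewrite -scalerAl mulrBr -!mpolyXD FSZ FSB !FSX (inv_swap dpos) subrr mulr0.
Qed.

Lemma mem_minors2 g : g \in minors2 K d -> exists (a b : 'I_m), (a < b)%N /\ g = minor2 K d a b.
Proof. by case/mapP => -[a b]; rewrite mem_filter => /andP [/= ab _] ->; exists a, b. Qed.

Lemma minors2_mem (a b : 'I_m) : (a < b)%N -> minor2 K d a b \in minors2 K d.
Proof.
move=> ab; apply/mapP; exists (a, b) => //; rewrite mem_filter /= ab.
by apply/allpairsP; exists (a, b); rewrite !mem_enum.
Qed.

Lemma mem_Gset g : g \in Gset K d lt -> exists (a b : 'I_m), (a < b)%N /\ g = fij_monic K d lt a b.
Proof. by case/mapP => -[a b]; rewrite mem_filter => /andP [/= ab _] ->; exists a, b. Qed.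

Lemma Gset_mem (a b : 'I_m) : (a < b)%N -> fij_monic K d lt a b \in Gset K d lt.
Proof.
move=> ab; apply/mapP; exists (a, b) => //; rewrite mem_filter /= ab.
by apply/allpairsP; exists (a, b); rewrite !mem_enum.
Qed.

Lemma I2D_FS v f : I2D (K:=K) d f -> FS v f = 0.
Proof.
case=> cs [_ ->]; rewrite (big_morph (FS v) (FSD v) (FS0 v)) big1 // => k _.
have /mem_minors2 [a [b [ab ->]]] := mem_nth 0 (ltn_ord k).
by rewrite minor2E; exact: FS_fij.
Qed.

Lemma XB_supp (A B : 'X_{1..m+m}) mo : A != B ->
  (mo \in msupp ('X_[A] - 'X_[B] : {mpoly K[m+m]})) = (mo == A) || (mo == B).
Proof.
move=> AB; rewrite mcoeff_msupp mcoeffB !mcoeffX (eq_sym A) (eq_sym B).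
have [->|nA] := eqVneq mo A.
  by rewrite ?eqxx (negbTE AB) subr0 oner_eq0.
have [eB|nB] := eqVneq mo B.
  by subst mo; rewrite sub0r oppr_eq0 oner_eq0.
by rewrite subrr eqxx.
Qed.

Lemma lmon_XB (A B : 'X_{1..m+m}) : lt B A ->
  lmon lt ('X_[A] - 'X_[B] : {mpoly K[m+m]}) = A /\
  lcoef lt ('X_[A] - 'X_[B] : {mpoly K[m+m]}) = 1.
Proof.
move=> BA.
have AB : A != B by apply/eqP => e; move: BA; rewrite e (negbTE (lt_irr Hlt _)).
have L : lmon lt ('X_[A] - 'X_[B] : {mpoly K[m+m]}) = A.
  apply: (lmon_char Hlt); first by rewrite XB_supp // eqxx.
  by move=> nu; rewrite XB_supp // => /orP [/eqP->|/eqP->]; [left|right].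
split=> //; rewrite /lcoef L mcoeffB !mcoeffX eqxx.
by rewrite eq_sym (negbTE AB) subr0.
Qed.

Lemma lmon_XB' (A B : 'X_{1..m+m}) : lt A B ->
  lmon lt ('X_[A] - 'X_[B] : {mpoly K[m+m]}) = B /\
  lcoef lt ('X_[A] - 'X_[B] : {mpoly K[m+m]}) = -1.
Proof.
move=> AB.
have E : ('X_[A] - 'X_[B] : {mpoly K[m+m]}) = (-1) *: ('X_[B] - 'X_[A]).
  by rewrite scaleN1r opprB.
have [L1 L2] := lmon_XB AB.
rewrite E (lmon_scale Hlt) ?oppr_eq0 ?oner_eq0 // L1; split=> //.
by rewrite /lcoef (lmon_scale Hlt) ?oppr_eq0 ?oner_eq0 // mcoeffZ -/(lcoef _ _) L2 mulr1.
Qed.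

Lemma fij_lead a b : P a b ->
  lmon lt (fij K d a b) = Lm a b /\ lcoef lt (fij K d a b) = 1.
Proof. by move=> Pab; rewrite fijE; apply: lmon_XB. Qed.

Lemma fij_lead' a b : P a b ->
  lmon lt (fij K d b a) = Lm a b /\ lcoef lt (fij K d b a) = -1.
Proof. by move=> Pab; rewrite fijE; apply: lmon_XB'. Qed.

Lemma fijm_lead a b : a != b ->
  lmon lt (fij_monic K d lt a b) = lmon lt (fij K d a b) /\
  lcoef lt (fij_monic K d lt a b) = 1.
Proof.
move=> ab.
have c0 : lcoef lt (fij K d a b) != 0.
  case/orP: (P_total dpos Hlt ab) => h.
    by rewrite (fij_lead h).2 oner_eq0.
  by rewrite (fij_lead' h).2 oppr_eq0 oner_eq0.
have L : lmon lt (fij_monic K d lt a b) = lmon lt (fij K d a b).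
  by rewrite /fij_monic (lmon_scale Hlt) // invr_eq0.
split=> //; rewrite /lcoef L /fij_monic mcoeffZ -/(lcoef _ _) mulVf //.
Qed.

Lemma mem_supp_fijm a b mo : mo \in msupp (fij_monic K d lt a b) ->
  mo = Lm a b \/ mo = Lm b a.
Proof.
rewrite /fij_monic => /msuppZ_le; rewrite fijE => /msuppB_le.
by rewrite mem_cat !msuppX !mem_seq1 => /orP [/eqP->|/eqP->]; [left|right].
Qed.

Lemma lem_LmLm x y z w : lem (Lm x y) (Lm z w) -> x = z /\ y = w.
Proof.
move/mnm_lepP => H; have := H (lshift m x); have := H (rshift m y).
rewrite /Lm !mnmDE !XXl !YYl !XXr !YYr !eqxx => h2 h1.
have hx : z = x.
  case: (eqVneq z x) => // ne; move: h1; rewrite (negbTE ne) /=; move: (dpos x); lia.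
have hy : w = y.
  case: (eqVneq w y) => // ne; move: h2; rewrite (negbTE ne) /=; move: (dpos y); lia.
by [].
Qed.

Lemma GB_lead f : I2D (K:=K) d f -> f != 0 ->
  exists a b, [/\ a != b, P a b & lem (Lm a b) (lmon lt f)].
Proof.
move=> If f0; set M := lmon lt f.
have HM : M \in msupp f := lmon_supp Hlt f0.
have [sM|nsM] := boolP (std M).
  exfalso; have := I2D_FS (inv M) If.
  rewrite /FS -big_filter (bigD1_seq M) ?filter_uniq //; last by rewrite mem_filter eqxx HM.
  rewrite big1_seq ?addr0; last first.
    move=> mu /andP [nmu]; rewrite mem_filter => /andP [/eqP emu Hmu]; exfalso.
    case: (fib_min dpos Hlt sM (esym emu)) => [e|h1]; first by rewrite e eqxx in nmu.
    case: (lmon_max Hlt Hmu) => [e|h2]; first by rewrite -/M e eqxx in nmu.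
    by move: (lt_asym Hlt h1); rewrite h2.
  by rewrite /= addr0 => e; move: HM; rewrite mcoeff_msupp e eqxx.
move: nsM; rewrite negb_forall => /existsP [a]; rewrite negb_forall => /existsP [b].
by rewrite !negb_imply => /and4P [ab Pab lemab _]; exists a, b.
Qed.

Lemma Gset_reduced : is_reduced_groebner lt (I2D (K:=K) d) (Gset K d lt).
Proof.
split; first split.
- move=> g /mem_Gset [a [b [ab ->]]].
  rewrite /fij_monic -minor2E; apply: in_ideal_gen; exact: minors2_mem.
- move=> f If f0; have [a [b [ab Pab le]]] := GB_lead If f0.
  case: (ltngtP a b) => [lab|lba|eab].
  + exists (fij_monic K d lt a b); first exact: Gset_mem.
    have [L C] := fijm_lead ab.
    by rewrite (lcoef_neq0 C) /= L (fij_lead Pab).1.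
  + exists (fij_monic K d lt b a); first exact: Gset_mem.
    have [L C] := fijm_lead (negbT (ltn_eqF lba)).
    by rewrite (lcoef_neq0 C) /= L (fij_lead' Pab).1.
  + by move: ab; rewrite -val_eqE /= eab eqxx.
- by move=> g /mem_Gset [a [b [ab ->]]]; apply: (fijm_lead (negbT (ltn_eqF ab))).2.
- move=> g g' /mem_Gset [a [b [ab ->]]] /mem_Gset [k [l [kl ->]]] ne mo Hmo.
  have ab' : a != b := negbT (ltn_eqF ab).
  have g0 : fij_monic K d lt a b != 0 by apply: lcoef_neq0; exact: (fijm_lead ab').2.
  apply/negP => H.
  case: (mem_supp_fijm Hmo) => Emo; case: (mem_supp_fijm (lmon_supp Hlt g0)) => E;
    move: H; rewrite Emo E => /lem_LmLm [e1 e2]; subst.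
  + by rewrite eqxx in ne.
  + by move: ab kl; lia.
  + by move: ab kl; lia.
  + by rewrite eqxx in ne.
Qed.
End Poly.

Theorem theorem4p1 (K : fieldType) (m : nat) (d : 'I_m -> nat)
    (lt : rel 'X_{1..m + m}) :
  (2 <= m)%N -> (forall i, (0 < d i)%N) -> term_order lt ->
  forall G : seq {mpoly K[m + m]},
    is_reduced_groebner lt (@I2D m K d) G <-> G =i @Gset m K d lt.
Proof.
move=> _ dpos Hlt G; split.
- move=> HG x; have HS := Gset_reduced K dpos Hlt.
  have Isub : forall p q, I2D (K:=K) d p -> I2D (K:=K) d q -> I2D (K:=K) d (p - q).
    by move=> p q; apply: in_ideal_sub.
  apply/idP/idP => h; [exact: (reduced_sub Hlt Isub HG HS) | exact: (reduced_sub Hlt Isub HS HG)].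
- by move=> E; apply: (reduced_eqi E); apply: Gset_reduced.
Qed.
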